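(* Let $f\ge 1$ and $k\ge 2$ be integers and let there be $n=kf+1$ validators, each maintaining a local DAG as described in the context (Tusk setting). If an honest validator $p_i$ commits a leader vertex $v\in DAG_i[\mathit{round}(w,1)]$ in a wave $w$ (i.e. at least $f+1$ vertices of $DAG_i[\mathit{round}(w,2)]$ have an edge to $v$), then for every honest validator $p_j$, every wave $w'>w$ and every leader vertex $v'$ of wave $w'$ committed by $p_j$ (in particular $v'\in DAG_j[\mathit{round}(w',1)]$; the leader of wave $w'$ is the $\mathit{round}(w',1)$ vertex of an arbitrary validator, selected by a shared coin), there is a path from $v'$ to $v$ in $DAG_j$.
   Context: Setting: $n=kf+1$ validators $p_1,\dots,p_n$, at most $f$ Byzantine, the rest honest. All local DAGs are subsets of one common set of vertices. Each vertex has a round number $r\ge1$ and a source validator; for each validator and round there is at most one vertex (no equivocation), so all local DAGs containing a given validator's vertex for a given round contain the identical vertex with identical edges. Every vertex of round $r\ge2$ has edges to $(k-1)f+1$ vertices of round $r-1$ with distinct sources. Each validator $p_i$ has a local DAG $DAG_i$, closed under edges (if $u\in DAG_i$ then all vertices $u$ has edges to are in $DAG_i$); $DAG_i[r]$ is its set of round-$r$ vertices; a path from $u$ to $v$ is a sequence of contiguous edges from $u$ to $v$. Waves consist of 3 rounds and consecutive waves are pipelined so that round 3 of wave $w$ is round 1 of wave $w+1$: $\mathit{round}(w,j)=2(w-1)+j$ for $j=1,2,3$. A validator $p_i$ commits the leader $v$ of wave $w$ (direct commit rule) if at least $f+1$ vertices of $DAG_i[\mathit{round}(w,2)]$ have an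 edge to $v$. *)

(* Defs.v *)
From mathcomp Require Import all_boot.
Set Implicit Arguments. Unset Strict Implicit. Unset Printing Implicit Defensive.

Definition round_of (w j : nat) : nat := 2 * (w - 1) + j.

(* A vertex x is an edge-target of u iff x \in parents u. *)
Definition commits (V : eqType) (f : nat) (rnd : V -> nat)
    (parents : V -> seq V) (D : pred V) (w : nat) (v : V) : Prop :=
  v \in D /\ rnd v = round_of w 1 /\
  exists S : seq V,
    [/\ uniq S, f.+1 <= size S &
        all (fun x => [&& x \in D, rnd x == round_of w 2 & v \in parents x]) S].

Definition dag_path (V : eqType) (parents : V -> seq V) (D : pred V)
    (u v : V) : Prop :=
  exists p : seq V,
    [/\ path (fun a b => b \in parents a) u p, last u p = v &
        all (fun x => x \in D) (u :: p)].

(* Main.v *)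
Require Import Defs.
From mathcomp Require Import all_boot.
From mathcomp Require Import zify.

Lemma common_elt (T : finType) (A B : seq T) :
  uniq A -> uniq B -> #|T| < size A + size B -> exists x, x \in A /\ x \in B.
Proof.
move=> uA uB hs.
case hh: (has (mem A) B).
  by case/hasP: hh => x xB xA; exists x.
have uAB : uniq (A ++ B) by rewrite cat_uniq uA uB hh.
have := max_card (mem (A ++ B)).
by rewrite (card_uniqP uAB) size_cat leqNgt hs.
Qed.

Theorem lemma3 (f k : nat) (hf : 1 <= f) (hk : 2 <= k)
  (V : eqType) (rnd : V -> nat) (src : V -> 'I_(k * f + 1))
  (parents : V -> seq V) (D : 'I_(k * f + 1) -> pred V)
  (byz : {set 'I_(k * f + 1)}) (Hbyz : #|byz| <= f)
  (Hrnd : forall u, 1 <= rnd u)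
  (Hnoequiv : forall u u', src u = src u' -> rnd u = rnd u' -> u = u')
  (Hpar : forall u, 2 <= rnd u ->
     [/\ size (parents u) = (k - 1) * f + 1,
         uniq (map src (parents u)) &
         all (fun x => rnd x == (rnd u).-1) (parents u)])
  (Hclosed : forall i u x, u \in D i -> x \in parents u -> x \in D i)
  (i j : 'I_(k * f + 1)) (Hi : i \notin byz) (Hj : j \notin byz)
  (w w' : nat) (v v' : V) (Hw : 1 <= w) (Hww : w < w')
  (Hc : commits f rnd parents (D i) w v)
  (Hc' : commits f rnd parents (D j) w' v') :
  dag_path parents (D j) v' v.
Proof.
case: Hc => _ [_ [S [uS szS allS]]].
case: Hc' => v'D [rv' _].
have uSs : uniq (map src S).
  rewrite map_inj_in_uniq // => a b aS bS eab.
  move/allP: allS => allS.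
  have /and3P [_ /eqP ra _] := allS a aS.
  have /and3P [_ /eqP rb _] := allS b bS.
  by apply: Hnoequiv => //; rewrite ra rb.
have base : forall u, rnd u = round_of w 3 -> u \in D j -> dag_path parents (D j) u v.
  move=> u ru uD.
  have [sz up ap] : [/\ size (parents u) = (k - 1) * f + 1,
         uniq (map src (parents u)) &
         all (fun x => rnd x == (rnd u).-1) (parents u)].
    by apply: Hpar; rewrite ru /round_of; lia.
  have [x [xA xB]] := @common_elt _ _ _ up uSs
    (ltac:(rewrite card_ord !size_map sz; rewrite /= in szS; clear -szS hk hf; nia)).
  case/mapP: xA => a aP ex; subst x; case/mapP: xB => b bS eab.
  move/allP: allS => allS; move/allP: ap => ap.
  have /and3P [_ /eqP rb vb] := allS b bS.
  have /eqP ra := ap a aP.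
  have ab : a = b by apply: Hnoequiv => //; rewrite ra rb ru /round_of; lia.
  subst b.
  exists [:: a; v]; split => //=.
    by rewrite aP vb.
  have aD := Hclosed _ _ _ uD aP.
  by rewrite uD aD (Hclosed _ _ _ aD vb).
have ind : forall r u, rnd u = round_of w 3 + r -> u \in D j ->
    dag_path parents (D j) u v.
  elim=> [|r IH] u ru uD; first by apply: base => //; rewrite ru addn0.
  have [sz up ap] : [/\ size (parents u) = (k - 1) * f + 1,
         uniq (map src (parents u)) &
         all (fun x => rnd x == (rnd u).-1) (parents u)].
    by apply: Hpar; rewrite ru /round_of; lia.
  case hp: (parents u) sz ap => [|x s]; first by rewrite /= addn1.
  move=> _ /= /andP [/eqP rx _].
  have xP : x \in parents u by rewrite hp mem_head.
  have xD := Hclosed _ _ _ uD xP.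
  have [p [pp lp ap']] := IH x (ltac:(rewrite rx ru addnS //)) xD.
  exists (x :: p); split => //=.
    by rewrite xP.
  by rewrite uD.
apply: (ind (rnd v' - round_of w 3)) => //.
rewrite rv' /round_of; lia.
Qed.
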